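(* There exists a gadget $H$ (in the sense defined in the context) among whose half-edges are three distinguished half-edges $e_1,e_2,e_3$, such that: (a) $\rho(v)\le 1$ and $\delta(v)\le 1$ for every vertex $v$ of $H$; (b) for every assignment in which each of $e_1,e_2,e_3$ is directed either toward its endpoint in $H$ or away from it, with at least one of them directed toward its endpoint, there exists an orientation of $H$ extending this assignment; (c) there is no orientation of $H$ in which all three of $e_1,e_2,e_3$ are directed away from their endpoints in $H$.
   Context: A gadget $H$ consists of a finite simple graph with vertex set $V(H)$ and edge set $E(H)$, a finite set of ''half-edges'' (unfinished edges), each attached to exactly one vertex of $V(H)$ (its endpoint), and prescribed functions $\rho,\delta,\theta: V(H)\to\mathbb{Z}_{\ge 0}$ with $\rho(v)+\delta(v)+\theta(v)$ equal to the number of edges and half-edges incident to $v$. An orientation of $H$ assigns to each edge of $E(H)$ either one of its two directions or ''undirected'', and to each half-edge either ''directed toward its endpoint'', ''directed away from its endpoint'', or ''undirected'', such that each vertex $v$ has exactly $\rho(v)$ incident edges/half-edges directed into $v$, exactly $\delta(v)$ directed out of $v$, and exactly $\theta(v)$ undirected. Half-edges other than $e_1,e_2,e_3$ are unconstrained in an orientation. *)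

(* Defs.v *)
From HB Require Import structures.
From mathcomp Require Import all_boot.
Set Implicit Arguments. Unset Strict Implicit. Unset Printing Implicit Defensive.

(* State of an edge/half-edge as seen from a vertex:
   Tow = directed toward that vertex, Away = directed away, Und = undirected. *)
Inductive dir := Tow | Away | Und.

Definition dir_eqb (a b : dir) : bool :=
  match a, b with
  | Tow, Tow | Away, Away | Und, Und => true
  | _, _ => false
  end.

Lemma dir_eqP : Equality.axiom dir_eqb.
Proof. by case; case; constructor. Qed.

HB.instance Definition _ := hasDecEq.Build dir dir_eqP.

Definition dopp (a : dir) : dir :=
  match a with Tow => Away | Away => Tow | Und => Und end.

Record gadget := Gadget {
  gV : finType;
  gE : rel gV;
  gHalf : finType;
  gend : gHalf -> gV;
  grho : gV -> nat;
  gdelta : gV -> nat;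
  gtheta : gV -> nat;
  gsym : symmetric gE;
  girr : irreflexive gE;
  gdeg : forall v, grho v + gdelta v + gtheta v
                   = #|[pred u | gE v u]| + #|[pred h | gend h == v]|
}.

Definition dcount (H : gadget) (eo : gV H -> gV H -> dir) (ho : gHalf H -> dir)
  (v : gV H) (d : dir) : nat :=
  #|[pred u | gE v u && (eo v u == d)]| + #|[pred h | (gend h == v) && (ho h == d)]|.

(* An orientation: eo v u is the state of edge vu as seen from v
   (Tow = directed into v); consistency eo u v = dopp (eo v u) on edges.
   ho h is the state of half-edge h (Tow = toward its endpoint). *)
Definition is_orientation (H : gadget) (eo : gV H -> gV H -> dir)
  (ho : gHalf H -> dir) : Prop :=
  (forall u v : gV H, gE u v -> eo v u = dopp (eo u v)) /\
  (forall v, dcount eo ho v Tow = grho v /\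
             dcount eo ho v Away = gdelta v /\
             dcount eo ho v Und = gtheta v).

Definition dir_of_bool (b : bool) : dir := if b then Tow else Away.

(* Main.v *)
Require Import Defs.
From HB Require Import structures.
From mathcomp Require Import all_boot.

Definition V := option (option bool).
Definition Hh := (option bool * bool)%type.
Definition E4 (u v : V) : bool := (u == None) != (v == None).
Lemma E4_sym : symmetric E4.
Proof. by move=> u v; rewrite /E4 eq_sym. Qed.
Lemma E4_irr : irreflexive E4.
Proof. by move=> u; rewrite /E4 eqxx. Qed.
Definition end6 (h : Hh) : V := Some h.1.
Definition rho4 (v : V) : nat := 1.
Definition delta4 (v : V) : nat := if v is None then 0 else 1.
Definition theta4 (v : V) : nat := if v is None then 2 else 1.

Lemma card_list (T : finType) (l : seq T) (P : pred T) :
  uniq l -> (forall x, x \in l) -> #|[pred x | P x]| = count P l.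
Proof.
move=> Hu Hl; rewrite cardE /enum_mem size_filter -enumT.
have /permP := uniq_perm (enum_uniq T) Hu (fun x => ltac:(by rewrite mem_enum Hl)).
by move=> ->.
Qed.

Definition allV : seq V := [:: None; Some None; Some (Some true); Some (Some false)].
Definition allH : seq Hh := [seq (x, b) | x <- [:: None; Some true; Some false], b <- [:: true; false]].
Lemma allV_uniq : uniq allV. Proof. by []. Qed.
Lemma allV_all x : x \in allV. Proof. by case: x => [[[]|]|]. Qed.
Lemma allH_uniq : uniq allH. Proof. by []. Qed.
Lemma allH_all x : x \in allH. Proof. by case: x => [[[]|] []]. Qed.
Lemma cV (P : pred V) : #|[pred x | P x]| = count P allV.
Proof. exact: card_list allV_uniq allV_all. Qed.
Lemma cH (P : pred Hh) : #|[pred x | P x]| = count P allH.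
Proof. exact: card_list allH_uniq allH_all. Qed.

Lemma deg4 (v : V) : rho4 v + delta4 v + theta4 v
   = #|[pred u | E4 v u]| + #|[pred h | end6 h == v]|.
Proof.
by case: v => [[[]|]|]; rewrite cV cH.
Qed.

Definition G := @Gadget V E4 Hh end6 rho4 delta4 theta4 E4_sym E4_irr deg4.

Definition bs (b1 b2 b3 : bool) (x : option bool) : bool :=
  match x with None => b1 | Some true => b2 | Some false => b3 end.
Definition kk (b1 b2 b3 : bool) : option bool :=
  if b1 then None else if b2 then Some true else Some false.

Definition eoB (b1 b2 b3 : bool) (u v : V) : dir :=
  if (u == None) && (v == Some (kk b1 b2 b3)) then Tow
  else if (v == None) && (u == Some (kk b1 b2 b3)) then Away else Und.
Definition hoB (b1 b2 b3 : bool) (h : Hh) : dir :=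
  if h.2 then dir_of_bool (bs b1 b2 b3 h.1)
  else if h.1 == kk b1 b2 b3 then Und
  else dopp (dir_of_bool (bs b1 b2 b3 h.1)).

Lemma posB (b1 b2 b3 : bool) : b1 || b2 || b3 ->
  @is_orientation G (eoB b1 b2 b3) (hoB b1 b2 b3).
Proof.
case: b1 b2 b3 => [] [] [] // _; split;
  try (by move=> [[[]|]|] [[[]|]|]);
  by move=> v; rewrite /dcount !cV !cH; case: v => [[[]|]|].
Qed.

Theorem lemma5 :
  exists (H : gadget) (e1 e2 e3 : gHalf H),
    [/\ e1 != e2, e1 != e3 & e2 != e3] /\
    (forall v : gV H, grho v <= 1 /\ gdelta v <= 1) /\
    (forall b1 b2 b3 : bool, b1 || b2 || b3 ->
       exists eo ho, is_orientation eo ho /\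
         ho e1 = dir_of_bool b1 /\ ho e2 = dir_of_bool b2 /\ ho e3 = dir_of_bool b3) /\
    ~ (exists eo ho, is_orientation eo ho /\
         ho e1 = Away /\ ho e2 = Away /\ ho e3 = Away).
Proof.
exists G, ((None, true) : Hh), ((Some true, true) : Hh), ((Some false, true) : Hh).
split; first by [].
split; first by move=> v; split => //; rewrite /= /delta4; case: v.
split.
  move=> b1 b2 b3 Hb; exists (eoB b1 b2 b3), (hoB b1 b2 b3); split; first exact: posB.
  by [].
case=> eo [ho [[Hs Hc] [H1 [H2 H3]]]].
have [Hc0 _] := Hc None.
have [_ [Ha1 _]] := Hc (Some None).
have [_ [Ha2 _]] := Hc (Some (Some true)).
have [_ [Ha3 _]] := Hc (Some (Some false)).
move: Hc0 Ha1 Ha2 Ha3; rewrite /dcount !cV !cH /= H1 H2 H3.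
rewrite (Hs None (Some None)) // (Hs None (Some (Some true))) //
        (Hs None (Some (Some false))) //.
by case: (eo None (Some None)); case: (eo None (Some (Some true)));
   case: (eo None (Some (Some false))).
Qed.
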